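(* If $\mathfrak W$ is a bracket pattern category, then $\bigcup_{w\in\mathfrak W}A(w)=\{\|w\|\mid w\in\mathfrak W\}$.
   Context: $\mathbb N=\{1,2,\dots\}$, $\mathbb N_0=\mathbb N\cup\{0\}$. A bracket pattern is a non-empty finite subset $w\subseteq\mathbb N$; $\|w\|:=\max(w)$. For bracket patterns $w,w'$: superposition $w\cup w'$; for $j\in w$ the projection $\cap_j w:=\{i\in w\mid i\le j\}$; the dual $w^\dagger:=\{\|w\|-i\mid i\in\mathbb N_0,\ i<\|w\|,\ i\notin w\}$. A bracket pattern category is a (possibly empty) set of bracket patterns closed under superposition, duals and projections. The completion of a bracket pattern $w$ is $A(w):=\{j-i\mid j\in w,\ i\in\mathbb N_0,\ i\notin w,\ i<j\}$. *)

(* Defs.v *)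
From HB Require Import structures.
From mathcomp Require Import all_boot.
From mathcomp Require Import finmap.
Set Implicit Arguments. Unset Strict Implicit. Unset Printing Implicit Defensive.
Local Open Scope fset_scope.

Definition bracket_pattern (w : {fset nat}) : Prop :=
  w != fset0 /\ 0 \notin w.

Definition bnorm (w : {fset nat}) : nat := \max_(i <- enum_fset w) i.

Definition bproj (j : nat) (w : {fset nat}) : {fset nat} :=
  [fset i in w | i <= j].

Definition bdual (w : {fset nat}) : {fset nat} :=
  [fset (bnorm w - i)%N | i in iota 0 (bnorm w) & i \notin w].

Definition bp_category (W : {fset nat} -> Prop) : Prop :=
  [/\ (forall w, W w -> bracket_pattern w),
      (forall w w', W w -> W w' -> W (w `|` w')),
      (forall w, W w -> W (bdual w)) &
      (forall w j, W w -> j \in w -> W (bproj j w))].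

Definition completion (w : {fset nat}) (k : nat) : Prop :=
  exists j i, [/\ j \in w, i \notin w, i < j & k = j - i].

(* Main.v *)
Require Import Defs.
From HB Require Import structures.
From mathcomp Require Import all_boot.
From mathcomp Require Import finmap.
Local Open Scope fset_scope.

Lemma max_in0 (s : seq nat) : \max_(i <- s) i \in 0%N :: s.
Proof.
elim: s => [|x s IH]; first by rewrite big_nil inE.
rewrite big_cons /maxn; case: ifP => _.
- move: IH; rewrite !inE => /orP[->|->] //; by rewrite !orbT.
- by rewrite !inE eqxx orbT.
Qed.

Lemma bnorm_eq (u : {fset nat}) j : j \in u -> (forall x, x \in u -> x <= j) -> bnorm u = j.
Proof.
move=> ju hu; apply/eqP; rewrite eqn_leq; apply/andP; split.
- apply/bigmax_leqP_seq => i hi _; exact: hu.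
- exact: (@leq_bigmax_seq _ (enum_fset u) xpredT id j).
Qed.

Lemma bnorm_ge (u : {fset nat}) x : x \in u -> x <= bnorm u.
Proof. move=> xu; exact: (@leq_bigmax_seq _ (enum_fset u) xpredT id x). Qed.

Lemma bnorm_proj (w : {fset nat}) j : j \in w -> bnorm (bproj j w) = j.
Proof.
move=> jw; apply: bnorm_eq; first by rewrite /bproj !inE /= jw leqnn.

by move=> x; rewrite /bproj !inE /= => /andP[].
Qed.

Theorem proposition7p7 (W : {fset nat} -> Prop) :
  bp_category W ->
  forall k : nat,
    (exists w, W w /\ completion w k) <-> (exists w, W w /\ k = bnorm w).
Proof.
case=> Hbp Hsup Hdual Hproj k; split.
- case=> w [Ww [j [i [jw iw ij ->]]]].
  set v := bproj j w.
  have Wv : W v by apply: Hproj.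
  have nv : bnorm v = j by apply: bnorm_proj.
  have iv : i \notin v by rewrite /v /bproj !inE /= (negbTE iw).
  have kd : (j - i)%N \in bdual v.
    rewrite /bdual; apply/imfsetP; exists i => //=.
      rewrite !inE /= mem_iota add0n nv ij /= negb_and; apply/orP; left; exact: iw.
    by rewrite nv.
  exists (bproj (j - i) (bdual v)); split; first by apply: Hproj => //; apply: Hdual.
  by rewrite bnorm_proj.
- case=> w [Ww ->]; exists w; split => //.
  have [w0 z] := Hbp w Ww.
  have hm : bnorm w \in w.
    have := max_in0 (enum_fset w); rewrite inE => /orP[/eqP h|] //.
    exfalso; case: (fset_0Vmem w) => [e|[x xw]]; first by rewrite e eqxx in w0.
    have := @bnorm_ge _ _ xw; rewrite /bnorm h leqn0 => /eqP x0.
    by rewrite -x0 xw in z.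
  exists (bnorm w), 0%N; split => //; last by rewrite subn0.
  rewrite lt0n; apply/negP => /eqP h; by rewrite -h hm in z.
Qed.
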